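(* Let $p\in R=A[t;\sigma,\delta]$ be monic of degree $n>1$, with companion matrix $C(p)\in M_n(A)$, and regard $R\subseteq M_n(A)[t;\sigma,\delta]$. The following are equivalent: (i) $t\in\mathrm{Idl}(Rp)$, i.e. $pt\in Rp$; (ii) for every $f\in R$: $f\in Rp$ if and only if $f(C(p))=0$; (iii) $p(C(p))=0$.
   Context: $A$ is a ring with $1$, $\sigma$ a unital ring endomorphism, $\delta$ a $\sigma$-derivation ($\delta$ additive, $\delta(ab)=\sigma(a)\delta(b)+\delta(a)b$); $R=A[t;\sigma,\delta]$ is the Ore extension with $ta=\sigma(a)t+\delta(a)$. $\sigma$ and $\delta$ are extended entrywise to $M_n(A)$, giving an endomorphism and a $\sigma$-derivation of $M_n(A)$, and $M_n(A)[t;\sigma,\delta]$ is the corresponding Ore extension; $A$ is embedded in $M_n(A)$ as scalar matrices, so $R\subseteq M_n(A)[t;\sigma,\delta]$. For a ring $S$ with $\sigma,\delta$, $f\in S[t;\sigma,\delta]$ and $c\in S$, $f(c)$ is the unique element of $S$ with $f-f(c)\in S[t;\sigma,\delta](t-c)$. For monic $p=t^n+a_{n-1}t^{n-1}+\dots+a_0$, $C(p)$ is its companion matrix (ones on the superdiagonal, last row $(-a_0,\dots,-a_{n-1})$, zeros elsewhere). $\mathrm{Idl}(Rp)=\{g\in R\mid pg\in Rp\}$. *)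

(* Defs.v *)
From HB Require Import structures.
From mathcomp Require Import all_boot all_order all_algebra.
Set Implicit Arguments.
Unset Strict Implicit.
Unset Printing Implicit Defensive.
Import GRing.Theory.
Local Open Scope ring_scope.

(* Elements of the Ore extension S[t; sg, dl] are represented by their
   (left) coefficient sequences  sum_i a_i t^i, i.e. as {poly S}; only the
   multiplication differs from the commutative one. *)

(* left multiplication by t:  t * (sum a_i t^i) = sum (sg a_i t^(i+1) + dl a_i t^i) *)
Definition ore_tmul (S : nzRingType) (sg dl : S -> S) (q : {poly S}) : {poly S} :=
  'X * map_poly sg q + map_poly dl q.

Definition ore_mul (S : nzRingType) (sg dl : S -> S) (f g : {poly S}) : {poly S} :=
  \sum_(i < size f) f`_i *: iter i (ore_tmul sg dl) g.

Definition in_left_ideal (S : nzRingType) (sg dl : S -> S) (q f : {poly S}) : Prop :=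
  exists g : {poly S}, f = ore_mul sg dl g q.

(* r is the (right) evaluation f(c): f - r lies in S[t;sg,dl] (t - c). *)
Definition is_ore_value (S : nzRingType) (sg dl : S -> S) (f : {poly S}) (c r : S) : Prop :=
  exists g : {poly S}, f - r%:P = ore_mul sg dl g ('X - c%:P).

(* companion matrix of a monic p of degree n.+2 (size n.+3) *)
Definition companion (A : nzRingType) (n : nat) (p : {poly A}) : 'M[A]_n.+2 :=
  \matrix_(i, j) (if j == i.+1 :> nat then 1
                  else if i == n.+1 :> nat then - p`_j else 0).

Definition scal_poly (A : nzRingType) (n : nat) (f : {poly A}) : {poly 'M[A]_n.+2} :=
  map_poly (fun a => a%:M) f.

(* Main.v *)
Require Import Defs.
From HB Require Import structures.
From mathcomp Require Import all_boot all_order all_algebra.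
Import GRing.Theory.
Local Open Scope ring_scope.

Lemma size_map_leq (R : nzRingType) (f : R -> R) (p : {poly R}) :
  (size (map_poly f p) <= size p)%N.
Proof. exact: size_poly. Qed.

Section Act.
Variables (S : nzRingType) (V : zmodType) (sc : S -> V -> V) (T : V -> V).
Hypothesis sc0l : forall v, sc 0 v = 0.
Hypothesis scDl : forall a b v, sc (a + b) v = sc a v + sc b v.

Definition act (f : {poly S}) (v : V) := \sum_(i < size f) sc f`_i (iter i T v).

Lemma act_bound N (f : {poly S}) v : (size f <= N)%N ->
  act f v = \sum_(i < N) sc f`_i (iter i T v).
Proof.
move=> le; rewrite /act (big_ord_widen N (fun i => sc f`_i (iter i T v)) le).
rewrite big_mkcond; apply: eq_bigr => i _; case: ifP => // /negbT.
by rewrite -leqNgt => H; rewrite nth_default // sc0l.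
Qed.

Lemma actD (f g : {poly S}) v : act (f + g) v = act f v + act g v.
Proof.
set N := maxn (size f) (size g).
rewrite (@act_bound N (f + g)); last by rewrite (leq_trans (size_polyD _ _)).
rewrite (@act_bound N f) ?leq_maxl // (@act_bound N g) ?leq_maxr //.
by rewrite -big_split; apply: eq_bigr => i _; rewrite coefD scDl.
Qed.

Lemma act0 v : act 0 v = 0.
Proof. by rewrite /act size_poly0 big_ord0. Qed.

Lemma actC c v : act c%:P v = sc c v.
Proof.
rewrite (@act_bound 1) ?size_polyC ?leq_b1 // big_ord1 coefC /=. done.
Qed.

Hypothesis sc1 : forall v, sc 1 v = v.
Lemma actX v : act 'X v = T v.
Proof.
rewrite /act size_polyX !big_ord_recl big_ord0 !coefX /= sc0l sc1 add0r addr0.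
done.
Qed.

Hypothesis scDr : forall a v w, sc a (v + w) = sc a v + sc a w.
Hypothesis scr0 : forall a, sc a 0 = 0.
Hypothesis scM : forall a b v, sc (a * b) v = sc a (sc b v).

Lemma actZ a (h : {poly S}) v : act (a *: h) v = sc a (act h v).
Proof.
rewrite (@act_bound (size h)) ?size_scale_leq //.
rewrite /act (big_morph (sc a) (scDr a) (scr0 a)).
by apply: eq_bigr => i _; rewrite coefZ scM.
Qed.


Variables (sg dl : S -> S).
Hypothesis sg0 : sg 0 = 0.
Hypothesis dl0 : dl 0 = 0.
Hypothesis TD : forall v w, T (v + w) = T v + T w.
Hypothesis Tsc : forall a w, T (sc a w) = sc (sg a) (T w) + sc (dl a) w.

Lemma T0 : T 0 = 0.
Proof. by apply: (addrI (T 0)); rewrite addr0 -TD addr0. Qed.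

Lemma act_v0 (f : {poly S}) : act f 0 = 0.
Proof.
rewrite /act big1 // => i _.
have -> : forall k, iter k T 0 = 0 by elim=> //= k ->; rewrite T0.
by rewrite scr0.
Qed.

Lemma act_tmul (g : {poly S}) v : act (ore_tmul sg dl g) v = T (act g v).
Proof.
rewrite /ore_tmul actD.
rewrite (@act_bound (size g) (map_poly dl g)); last exact: size_map_leq.
rewrite (@act_bound (size g).+1 ('X * _)); last first.
  rewrite (leq_trans (size_polyMleq _ _)) // size_polyX /=.
  by rewrite ltnS size_map_leq.
rewrite big_ord_recl coefXM /= sc0l add0r.
rewrite /act (big_morph T TD T0) -big_split; apply: eq_bigr => i _ /=.
by rewrite coefXM /= !coef_map_id0 // Tsc.
Qed.

Lemma act_iter_tmul k (g : {poly S}) v : act (iter k (ore_tmul sg dl) g) v = iter k T (act g v).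
Proof. by elim: k => //= k IH; rewrite act_tmul IH. Qed.

Lemma act_mul (f g : {poly S}) v : act (ore_mul sg dl f g) v = act f (act g v).
Proof.
rewrite /ore_mul (big_morph (fun h => act h v) (fun x y => actD x y v) (act0 v)).
by apply: eq_bigr => i _; rewrite actZ act_iter_tmul.
Qed.
End Act.
Section Div.
Variables (S : nzRingType) (sg dl : S -> S).
Hypothesis sg0 : sg 0 = 0.
Hypothesis sg1 : sg 1 = 1.
Hypothesis dl0 : dl 0 = 0.

Lemma tmul_monic (q : {poly S}) : q \is monic ->
  (ore_tmul sg dl q \is monic) && (size (ore_tmul sg dl q) == (size q).+1).
Proof.
move=> /monicP mq.
have lh : sg (lead_coef q) != 0 by rewrite mq sg1 oner_neq0.
have sh : size (map_poly sg q) = size q by rewrite size_map_poly_id0.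
have mh : map_poly sg q \is monic by apply/monicP; rewrite lead_coef_map_id0 // mq sg1.
have sXh : size ('X * map_poly sg q) = (size q).+1.
  by rewrite -commr_polyX size_mulX ?monic_neq0 // sh.
have lt : (size (map_poly dl q) < size ('X * map_poly sg q)%R)%N.
  by rewrite sXh ltnS size_map_leq.
rewrite /ore_tmul (size_polyDl lt) sXh eqxx andbT.
by apply/monicP; rewrite (lead_coefDl lt); apply/monicP; rewrite monicMl ?monicX.
Qed.

Lemma iter_tmul_monic k (q : {poly S}) : q \is monic ->
  (iter k (ore_tmul sg dl) q \is monic) && (size (iter k (ore_tmul sg dl) q) == (size q + k)%N).
Proof.
move=> mq; elim: k => [|k /andP [mk /eqP sk]] /=; first by rewrite mq addn0 eqxx.
case/andP: (tmul_monic _ mk) => -> /eqP ->. by rewrite sk addnS eqxx.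
Qed.

Definition polysc (a : S) (h : {poly S}) := a *: h.

Lemma ore_mulE (f g : {poly S}) :
  ore_mul sg dl f g = @act S _ polysc (ore_tmul sg dl) f g.
Proof. by []. Qed.

Lemma ore_mulD (f g h : {poly S}) :
  ore_mul sg dl (f + g) h = ore_mul sg dl f h + ore_mul sg dl g h.
Proof. apply: (@actD S _ polysc) => *; rewrite /polysc ?scale0r ?scalerDl //. Qed.

Lemma ore_mul_mono c k (h : {poly S}) :
  ore_mul sg dl (c *: 'X^k) h = c *: iter k (ore_tmul sg dl) h.
Proof.
rewrite ore_mulE (@act_bound S _ polysc _ _ k.+1); first last.
- by rewrite (leq_trans (size_scale_leq _ _)) // size_polyXn.
- by move=> v; rewrite /polysc scale0r.
rewrite big_ord_recr /= big1 ?add0r; first by rewrite coefZ coefXn eqxx mulr1.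
by move=> i _; rewrite /polysc coefZ coefXn /= (ltn_eqF (ltn_ord i)) mulr0 scale0r.
Qed.

Lemma ore_div (q : {poly S}) m : q \is monic -> size q = m.+1 ->
  forall f : {poly S}, exists g r, f = ore_mul sg dl g q + r /\ (size r <= m)%N.
Proof.
move=> mq sq f; move: {2}(size f) (leqnn (size f)) => N; elim: N f => [|N IH] f sf.
  by exists 0, f; rewrite /ore_mul size_poly0 big_ord0 add0r (leq_trans sf).
have [leN|ltN] := leqP (size f) N; first exact: IH.
have sfN : size f = N.+1 by apply/eqP; rewrite eqn_leq sf ltN.
have [le|lt] := leqP (size f) m.
  by exists 0, f; rewrite /ore_mul size_poly0 big_ord0 add0r.
rewrite sfN ltnS in lt.
set k := (N - m)%N.
case/andP: (iter_tmul_monic k _ mq) => mH /eqP sH.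
set H := iter k (ore_tmul sg dl) q in mH sH.
rewrite sq addSn subnKC // in sH.
set c := f`_N.
have [|g [r [Hf sr]]] := IH (f - c *: H).
  apply/leq_sizeP => j lej; rewrite coefB coefZ.
  case: (ltngtP N j) lej => // [ltj|<-] _.
    by rewrite !nth_default ?mulr0 ?subr0 // ?sfN ?sH.
  by move/monicP: mH; rewrite lead_coefE sH /= => ->; rewrite mulr1 subrr.
exists (g + c *: 'X^k), r; split => //.
rewrite ore_mulD ore_mul_mono -/H -[f](subrK (c *: H)) Hf.
by rewrite addrAC.
Qed.
End Div.
Section Main.
Variables (A : nzRingType) (sg : {rmorphism A -> A}) (dl : A -> A).
Hypothesis dl_add : forall a b, dl (a + b) = dl a + dl b.
Hypothesis dl_mul : forall a b, dl (a * b) = sg a * dl b + dl a * b.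
Variables (n : nat) (p : {poly A}).
Hypothesis p_monic : p \is monic.
Hypothesis p_size : size p = n.+3.

Local Notation C := (companion n p).
Local Notation sgM := (map_mx sg : 'M[A]_n.+2 -> 'M[A]_n.+2).
Local Notation dlM := (map_mx dl : 'M[A]_n.+2 -> 'M[A]_n.+2).

Lemma dl0 : dl 0 = 0.
Proof. by apply: (addrI (dl 0)); rewrite addr0 -dl_add addr0. Qed.

Lemma dl1 : dl 1 = 0.
Proof. by apply: (addrI (dl 1)); rewrite addr0 -{3}[1]mulr1 dl_mul rmorph1 mul1r mulr1. Qed.

Lemma dl_sum I (r : seq I) (P : pred I) F : dl (\sum_(i <- r | P i) F i) = \sum_(i <- r | P i) dl (F i).
Proof. exact: (big_morph dl dl_add dl0). Qed.

Definition scA (a : A) (v : 'rV[A]_n.+2) := a *: v.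
Definition TA (v : 'rV[A]_n.+2) := map_mx sg v *m C + map_mx dl v.
Definition scM (a w : 'M[A]_n.+2) := a * w.
Definition TM (w : 'M[A]_n.+2) := sgM w * C + dlM w.

Lemma dlmxD m k (v w : 'M[A]_(m, k)) : map_mx dl (v + w) = map_mx dl v + map_mx dl w.
Proof. by apply/matrixP => i j; rewrite !mxE dl_add. Qed.

Lemma TA_D v w : TA (v + w) = TA v + TA w.
Proof. by rewrite /TA dlmxD map_mxD mulmxDl addrACA. Qed.

Lemma TA_sc a v : TA (scA a v) = scA (sg a) (TA v) + scA (dl a) v.
Proof.
rewrite /TA /scA map_mxZ -scalemxAl scalerDr -addrA; congr (_ + _).
by apply/matrixP => i j; rewrite !mxE dl_mul.
Qed.

Lemma TM_D v w : TM (v + w) = TM v + TM w.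
Proof. by rewrite /TM dlmxD map_mxD mulrDl addrACA. Qed.

Lemma dlM_mul a w : dlM (a * w) = sgM a * dlM w + dlM a * w.
Proof.
rewrite -!mulmxE; apply/matrixP => i j; rewrite !mxE dl_sum -big_split.
by apply: eq_bigr => k _; rewrite !mxE dl_mul.
Qed.

Lemma TM_sc a w : TM (scM a w) = scM (sgM a) (TM w) + scM (dlM a) w.
Proof.
rewrite /TM /scM dlM_mul mulrDr !addrA mulrA; congr (_ * _ + _ + _).
by rewrite -!mulmxE map_mxM.
Qed.

Local Notation actA := (act A _ scA TA).
Local Notation actM := (act _ _ scM TM).

Lemma actA_mul f g v : actA (ore_mul sg dl f g) v = actA f (actA g v).
Proof.
apply: act_mul => //; rewrite /scA.
- by move=> *; rewrite scale0r.
- by move=> *; rewrite scalerDl.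
- by move=> *; rewrite scalerDr.
- by move=> *; rewrite scaler0.
- by move=> *; rewrite scalerA.
- exact: rmorph0.
- exact: dl0.
- exact: TA_D.
- exact: TA_sc.
Qed.

Lemma sgM0 : sgM 0 = 0.
Proof. by apply/matrixP => i j; rewrite !mxE rmorph0. Qed.
Lemma dlM0 : dlM 0 = 0.
Proof. by apply/matrixP => i j; rewrite !mxE dl0. Qed.
Lemma sgM1 : sgM 1 = 1.
Proof. by apply/matrixP => i j; rewrite !mxE rmorph_nat. Qed.
Lemma dlM1 : dlM 1 = 0.
Proof. by apply/matrixP => i j; rewrite !mxE; case: (i == j); rewrite ?dl1 ?dl0. Qed.

Lemma actM_mul f g v : actM (ore_mul sgM dlM f g) v = actM f (actM g v).
Proof.
apply: act_mul => //; rewrite /scM.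
- by move=> *; rewrite mul0r.
- by move=> *; rewrite mulrDl.
- by move=> *; rewrite mulrDr.
- by move=> *; rewrite mulr0.
- by move=> *; rewrite mulrA.
- exact: sgM0.
- exact: dlM0.
- exact: TM_D.
- exact: TM_sc.
Qed.

Lemma actA_v0 f : actA f 0 = 0.
Proof. apply: act_v0; [by move=> a; rewrite /scA scaler0 | exact: TA_D]. Qed.
Lemma actM_v0 f : actM f 0 = 0.
Proof. apply: act_v0; [by move=> a; rewrite /scM mulr0 | exact: TM_D]. Qed.

Lemma actA_D f g v : actA (f + g) v = actA f v + actA g v.
Proof. by apply: actD => *; rewrite /scA ?scale0r ?scalerDl. Qed.
Lemma actM_D f g v : actM (f + g) v = actM f v + actM g v.
Proof. by apply: actD => *; rewrite /scM ?mul0r ?mulrDl. Qed.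
Lemma actA_X v : actA 'X v = TA v.
Proof. by apply: actX => *; rewrite /scA ?scale0r ?scale1r. Qed.
Lemma actM_X v : actM 'X v = TM v.
Proof. by apply: actX => *; rewrite /scM ?mul0r ?mul1r. Qed.
Lemma actM_C c v : actM c%:P v = c * v.
Proof. by apply: actC => *; rewrite /scM ?mul0r. Qed.


Lemma TA_delta (i : 'I_n.+2) : TA 'e_i = row i C.
Proof.
rewrite /TA rowE; have -> : map_mx dl ('e_i : 'rV[A]_n.+2) = 0.
  by apply/matrixP => a b; rewrite !mxE; case: (_ && _); rewrite ?dl1 ?dl0.
rewrite addr0; congr (_ *m _).
by apply/matrixP => a b; rewrite !mxE rmorph_nat.
Qed.

Lemma rowC_lt (i : 'I_n.+2) : (i < n.+1)%N -> row i C = 'e_(inord i.+1).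
Proof.
move=> lt; apply/rowP => j; rewrite !mxE (ltn_eqF lt) eqxx /=.
have -> : (j == inord i.+1) = (j == i.+1 :> nat) by rewrite -val_eqE /= inordK.
by case: (j == i.+1 :> nat).
Qed.

Lemma rowC_last : row ord_max C = - \row_(j < n.+2) p`_j.
Proof.
apply/rowP => j; rewrite !mxE (ltn_eqF (ltn_ord j)) /= eqxx //.
Qed.

Lemma iterE k : (k < n.+2)%N -> iter k TA 'e_0 = 'e_(inord k).
Proof.
elim: k => [|k IH] lt.
  by congr (delta_mx _ _); apply: val_inj; rewrite /= inordK.
rewrite /= IH ?(ltn_trans _ lt) // TA_delta rowC_lt; last by rewrite inordK // (ltn_trans _ lt).
by congr (delta_mx _ _); apply: val_inj; rewrite /= !inordK // (ltn_trans _ lt).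
Qed.

Lemma sum_e (r : {poly A}) :
  \sum_(i < n.+2) scA r`_i (iter i TA 'e_0) = \row_(j < n.+2) r`_j.
Proof.
rewrite [RHS]row_sum_delta; apply: eq_bigr => i _.
by rewrite iterE // inord_val mxE.
Qed.

Lemma sc0A v : scA 0 v = 0.
Proof. by rewrite /scA scale0r. Qed.

Lemma act_small (r : {poly A}) : (size r <= n.+2)%N ->
  actA r 'e_0 = \row_(j < n.+2) r`_j.
Proof. by move=> le; rewrite (@act_bound _ _ _ _ sc0A n.+2 r) // sum_e. Qed.

Lemma act_p0 : actA p 'e_0 = 0.
Proof.
rewrite (@act_bound _ _ _ _ sc0A n.+3) ?p_size // big_ord_recr /= sum_e.
have -> : p`_n.+2 = 1 by move/monicP: p_monic; rewrite lead_coefE p_size.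
rewrite iterE // TA_delta rowC_lt ?inordK // TA_delta.
have -> : (inord n.+1 : 'I_n.+2) = ord_max by apply: val_inj; rewrite /= inordK.
by rewrite rowC_last /scA scale1r subrr.
Qed.


Lemma RA f : in_left_ideal sg dl p f <-> actA f 'e_0 = 0.
Proof.
split => [[g ->]|H]; first by rewrite actA_mul act_p0 actA_v0.
have [g [r [Hf sr]]] := @ore_div _ _ dl (rmorph0 sg) (rmorph1 sg) _ _ p_monic p_size f.
have r0 : r = 0.
  move: H; rewrite Hf actA_D actA_mul act_p0 actA_v0 add0r act_small // => /rowP Hr.
  apply/polyP => j; rewrite coef0; case: (ltnP j n.+2) => [lt|ge].
    by have := Hr (Ordinal lt); rewrite !mxE.
  by rewrite nth_default // (leq_trans sr ge).
by exists g; rewrite Hf r0 addr0.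
Qed.

Lemma row_TM (w : 'M[A]_n.+2) i : row i (TM w) = TA (row i w).
Proof.
rewrite /TM /TA -mulmxE; apply/rowP => j; rewrite !mxE; congr (_ + _).
by apply: eq_bigr => k _; rewrite !mxE.
Qed.

Lemma row_iterTM k (w : 'M[A]_n.+2) i : row i (iter k TM w) = iter k TA (row i w).
Proof. by elim: k => //= k IH; rewrite row_TM IH. Qed.

Lemma sc0M v : scM 0 v = 0.
Proof. by rewrite /scM mul0r. Qed.

Lemma scal0 : (0 : A)%:M = 0 :> 'M[A]_n.+2.
Proof. by apply/matrixP => i j; rewrite !mxE mul0rn. Qed.

Lemma row_actM f (w : 'M[A]_n.+2) i : row i (actM (scal_poly n f) w) = actA f (row i w).
Proof.
rewrite (@act_bound _ _ _ _ sc0M (size f)); last exact: size_poly.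
apply/rowP => j; rewrite /act !mxE !summxE; apply: eq_bigr => k _.
rewrite /scM /scal_poly coef_map_id0 ?scal0 // -mulmxE mul_scalar_mx /scA !mxE.
by rewrite -row_iterTM mxE.
Qed.

Lemma actq1 : actM ('X - C%:P) 1 = 0.
Proof.
by rewrite -polyCN actM_D actM_X actM_C /TM sgM1 dlM1 mul1r mulr1 addr0 addrN.
Qed.

Lemma RM0 f : is_ore_value sgM dlM (scal_poly n f) C 0 <-> actM (scal_poly n f) 1 = 0.
Proof.
split => [[g]|H].
  by rewrite polyC0 subr0 => ->; rewrite actM_mul actq1 actM_v0.
have [g [r [Hf sr]]] := @ore_div _ _ dlM sgM0 sgM1 _ _ (monicXsubC C) (size_XsubC C) (scal_poly n f).
have r0 : r = 0.
  move: H; rewrite Hf actM_D actM_mul actq1 actM_v0 add0r (size1_polyC sr) actM_C mulr1.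
  by move=> ->; rewrite polyC0.
by exists g; rewrite Hf r0 polyC0 !addr0 subr0.
Qed.

Lemma RM f : is_ore_value sgM dlM (scal_poly n f) C 0 <-> forall i : 'I_n.+2, actA f 'e_i = 0.
Proof.
apply: (iff_trans (RM0 f)); split => [H i|H].
  by rewrite -row1 -row_actM H; apply/rowP => j; rewrite !mxE.
apply/row_matrixP => i; rewrite row_actM row1 H.
by apply/rowP => j; rewrite !mxE.
Qed.


Lemma main_tfae :
  [<-> in_left_ideal sg dl p (ore_mul sg dl p 'X);
       forall f, in_left_ideal sg dl p f <-> is_ore_value sgM dlM (scal_poly n f) C 0;
       is_ore_value sgM dlM (scal_poly n p) C 0].
Proof.
tfae.
- move=> [g Hg].
  have Pk : forall k, (k < n.+2)%N -> actA p (iter k TA 'e_0) = 0.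
    elim=> [|k IH] lt; first exact: act_p0.
    transitivity (actA (ore_mul sg dl p 'X) (iter k TA 'e_0)).
      by rewrite actA_mul actA_X.
    by rewrite Hg actA_mul IH ?actA_v0 // (ltn_trans _ lt).
  move=> f; apply: (iff_sym (iff_trans (RM f) _)); split.
    by move=> H; apply/RA; apply: H.
  by move=> [h ->] i; rewrite actA_mul -(inord_val i) -iterE // Pk ?actA_v0.
- move=> H; apply/H; exists 1.
  by rewrite /ore_mul size_poly1 big_ord1 coef1 /= scale1r.
- move/RM => H; apply/RA; rewrite actA_mul actA_X.
  by rewrite -[TA _]/(iter 1 TA 'e_0) iterE.
Qed.

End Main.

Theorem corollary1p12 (A : nzRingType) (sg : {rmorphism A -> A}) (dl : A -> A)
  (dl_add : forall a b, dl (a + b) = dl a + dl b)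
  (dl_mul : forall a b, dl (a * b) = sg a * dl b + dl a * b)
  (n : nat) (p : {poly A}) (p_monic : p \is monic) (p_size : size p = n.+3) :
  let C := companion n p in
  let sgM := map_mx sg : 'M[A]_n.+2 -> 'M[A]_n.+2 in
  let dlM := map_mx dl : 'M[A]_n.+2 -> 'M[A]_n.+2 in
  let evalC_zero (f : {poly A}) := is_ore_value sgM dlM (scal_poly n f) C 0 in
  [<-> in_left_ideal sg dl p (ore_mul sg dl p 'X);
        forall f, in_left_ideal sg dl p f <-> evalC_zero f;
        evalC_zero p].
Proof. exact: main_tfae. Qed.
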